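(* Let $p\in(1/2,1)$, $\alpha=p/(1-p)$, and for $r=1,2,\ldots$ let $\epsilon_r=\dfrac{\alpha-\alpha^{1/r}}{\alpha^{1/r+1}-1}$. Then $(\epsilon_r)_{r\ge1}$ is an increasing sequence, and for every $r\ge1$ and every $\epsilon\in[\epsilon_r,\epsilon_{r+1})$, at least $r+1$ consecutive $Y$ observations are necessary for a $Y$ cascade to begin: on every path of the walk that leaves $[-1,1]$ above $1$ at some step $n$, the last $r+1$ steps (steps $n-r,\ldots,n$) are all up-steps ($Y$ observations).
   Context: Observational learning model: an item has true value $V\in\{G,B\}$; agents arrive sequentially, each receives a private binary signal equal to the ''correct'' signal with probability $p\in(1/2,1)$, and each agent is independently fake with probability $\epsilon\in[0,1)$ (a fake agent's recorded action is always $Y$ = buy). Define $a=p+(1-p)\epsilon$, $b=p(1-\epsilon)$ and $\eta=\eta(\epsilon)=\log\big(a/(1-b)\big)/\log\alpha\in(0,1]$. Before any cascade, the agents' sufficient statistic $h$ evolves as the following walk: $h_0=0$ and at each step $h$ increases by $\eta$ (an observed $Y$) or decreases by $1$ (an observed $N$); the walk is stopped the first time it leaves $[-1,1]$. Leaving above $1$ is the beginning of a $Y$ cascade, leaving below $-1$ of an $N$ cascade. *)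

(* Defs.v *)
From Stdlib Require Import Reals Lra Lia.
Open Scope R_scope.

Definition alpha (p : R) : R := p / (1 - p).

Definition eps_seq (p : R) (r : nat) : R :=
  (alpha p - Rpower (alpha p) (1 / INR r)) /
  (Rpower (alpha p) (1 / INR r + 1) - 1).

Definition a_par (p e : R) : R := p + (1 - p) * e.
Definition b_par (p e : R) : R := p * (1 - e).
Definition eta (p e : R) : R := ln (a_par p e / (1 - b_par p e)) / ln (alpha p).

(* The walk h driven by observations s : nat -> bool; s j (j >= 1) is the
   j-th observation (true = Y, up-step +eta; false = N, down-step -1).
   h_0 = 0 and h_n = h_{n-1} + step of observation n. *)
Fixpoint walk (et : R) (s : nat -> bool) (n : nat) : R :=
  match n with
  | O => 0
  | S k => walk et s k + (if s (S k) then et else -1)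
  end.

(* Main.v *)
Require Import Defs.
From Stdlib Require Import Reals Lra Lia.
Open Scope R_scope.

Lemma walk_up et s n d : (d <= n)%nat ->
  (forall i, (i < d)%nat -> s (n - i)%nat = true) ->
  walk et s n = walk et s (n - d) + INR d * et.
Proof.
  induction d as [|d IH]; intros Hd Hs.
  - rewrite Nat.sub_0_r; simpl; lra.
  - rewrite IH by (try lia; intros; apply Hs; lia).
    replace (n - d)%nat with (S (n - S d)) by lia.
    simpl walk. replace (S (n - S d)) with (n - d)%nat by lia.
    rewrite (Hs d) by lia. rewrite S_INR. lra.
Qed.

Lemma walk_claim et r s n : 0 <= et -> INR r * et <= 1 ->
  (forall k, (k < n)%nat -> -1 <= walk et s k <= 1) -> 1 < walk et s n ->
  forall d, (d <= r + 1)%nat -> (d <= n)%nat /\ forall i, (i < d)%nat -> s (n - i)%nat = true.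
Proof.
  intros He Hr Hb Hn d.
  induction d as [|d IH]; intros Hd.
  - split; [lia | intros; lia].
  - destruct IH as [Hdn Hs]; [lia|].
    assert (Hle : INR d * et <= 1).
    { apply Rle_trans with (INR r * et); auto.
      apply Rmult_le_compat_r; auto. apply le_INR; lia. }
    pose proof (walk_up et s n d Hdn Hs) as W.
    assert (Hn1 : (d < n)%nat).
    { destruct (Nat.eq_dec d n) as [E|E]; [|lia].
      subst d. rewrite Nat.sub_diag in W. simpl in W. lra. }
    assert (Hsd : s (n - d)%nat = true).
    { destruct (s (n - d)%nat) eqn:E; auto.
      exfalso.
      assert (Wm : walk et s (n - d) = walk et s (n - S d) - 1).
      { replace (n - d)%nat with (S (n - S d)) at 1 by lia. simpl walk.
        replace (S (n - S d)) with (n - d)%nat by lia. rewrite E. lra. }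
      specialize (Hb (n - S d)%nat ltac:(lia)). lra. }
    split; [lia|]. intros i Hi.
    destruct (Nat.eq_dec i d); [subst; auto | apply Hs; lia].
Qed.

Lemma rp_gt1 x y : 1 < x -> 0 < y -> 1 < Rpower x y.
Proof. intros. rewrite <- (Rpower_O x) by lra. apply Rpower_lt; lra. Qed.

Theorem lemma2 (p : R) (hp : 1/2 < p < 1) :
  (forall r : nat, (1 <= r)%nat -> eps_seq p r < eps_seq p (S r)) /\
  (forall (r : nat) (e : R), (1 <= r)%nat -> 0 <= e < 1 ->
     eps_seq p r <= e < eps_seq p (S r) ->
     forall (s : nat -> bool) (n : nat),
       (forall k : nat, (k < n)%nat -> -1 <= walk (eta p e) s k <= 1) ->
       1 < walk (eta p e) s n ->
       (r + 1 <= n)%nat /\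
       (forall j : nat, (n - r <= j <= n)%nat -> s j = true)).
Proof.
  assert (Ha : 1 < alpha p).
  { unfold alpha. apply (Rmult_lt_reg_r (1 - p)); [lra|].
    unfold Rdiv; rewrite Rmult_assoc, Rinv_l by lra. lra. }
  assert (Hrp : forall r, (1 <= r)%nat ->
     Rpower (alpha p) (1 / INR r + 1) = alpha p * Rpower (alpha p) (1 / INR r)).
  { intros r _. rewrite Rpower_plus, Rpower_1 by lra. ring. }
  split.
  - intros r Hr. unfold eps_seq. rewrite !Hrp by lia.
    set (A := alpha p) in *.
    assert (Hr0 : 0 < INR r) by (apply lt_0_INR; lia).
    assert (Hr1 : INR r < INR (S r)) by (apply lt_INR; lia).
    set (x1 := Rpower A (1 / INR r)).
    set (x2 := Rpower A (1 / INR (S r))).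
    assert (H1 : 1 < x2) by (apply rp_gt1; auto; apply Rdiv_lt_0_compat; lra).
    assert (H12 : x2 < x1).
    { apply Rpower_lt; auto. unfold Rdiv; rewrite !Rmult_1_l.
      apply Rinv_lt_contravar; nra. }
    assert (D1 : 0 < A * x1 - 1) by nra.
    assert (D2 : 0 < A * x2 - 1) by nra.
    assert (E : (A - x2) / (A * x2 - 1) - (A - x1) / (A * x1 - 1)
               = ((A*A - 1) * (x1 - x2)) / ((A * x1 - 1) * (A * x2 - 1)))
      by (field; lra).
    assert (0 < ((A*A - 1) * (x1 - x2)) / ((A * x1 - 1) * (A * x2 - 1))).
    { apply Rdiv_lt_0_compat; apply Rmult_lt_0_compat; nra. }
    lra.
  - intros r e Hr He [Hle _] s n Hb Hn.
    assert (Hr0 : 0 < INR r) by (apply lt_0_INR; lia).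
    unfold eps_seq in Hle. rewrite Hrp in Hle by lia.
    set (A := alpha p) in *.
    set (x1 := Rpower A (1 / INR r)) in *.
    assert (H1 : 1 < x1) by (apply rp_gt1; auto; apply Rdiv_lt_0_compat; lra).
    assert (D1 : 0 < A * x1 - 1) by nra.
    assert (Hy : a_par p e / (1 - b_par p e) = (A + e) / (1 + A * e)).
    { unfold A, alpha, a_par, b_par. field. split; nra. }
    assert (Hx : A - x1 <= e * (A * x1 - 1)).
    { apply (Rmult_le_compat_r (A * x1 - 1)) in Hle; [|lra].
      unfold Rdiv in Hle. rewrite Rmult_assoc, Rinv_l in Hle by lra. lra. }
    assert (Hy1 : 1 <= (A + e) / (1 + A * e)).
    { apply (Rmult_le_reg_r (1 + A * e)); [nra|].
      unfold Rdiv; rewrite Rmult_assoc, Rinv_l by nra. nra. }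
    assert (Hy2 : (A + e) / (1 + A * e) <= x1).
    { apply (Rmult_le_reg_r (1 + A * e)); [nra|].
      unfold Rdiv; rewrite Rmult_assoc, Rinv_l by nra. nra. }
    assert (HlnA : 0 < ln A) by (rewrite <- ln_1; apply ln_increasing; lra).
    assert (Het0 : 0 <= eta p e).
    { unfold eta. fold A. rewrite Hy. unfold Rdiv; apply Rmult_le_pos; [|left; apply Rinv_0_lt_compat; auto].
      unfold Rdiv in Hy1. rewrite <- ln_1. destruct Hy1 as [Hy1|Hy1]; [left; apply ln_increasing; lra|].
      rewrite <- Hy1; lra. }
    assert (Het1 : INR r * eta p e <= 1).
    { unfold eta. fold A. rewrite Hy.
      assert (ln ((A + e) / (1 + A * e)) <= ln x1).
      { destruct Hy2 as [Hy2|Hy2]; [left; apply ln_increasing; lra|rewrite Hy2; lra]. }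
      unfold x1, Rpower in H. rewrite ln_exp in H.
      apply (Rmult_le_reg_r (ln A)); auto.
      unfold Rdiv in *. rewrite Rmult_1_l in *.
      rewrite Rmult_assoc, Rmult_assoc, Rinv_l by lra.
      apply (Rmult_le_reg_l (/ INR r)). apply Rinv_0_lt_compat; lra.
      rewrite <- Rmult_assoc, Rinv_l by lra. lra. }
    destruct (walk_claim (eta p e) r s n Het0 Het1 Hb Hn (r + 1) (le_n _)) as [Hn1 Hs].
    split; auto. intros j Hj.
    replace j with (n - (n - j))%nat by lia. apply Hs. lia.
Qed.
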